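(* Let $D\subset\mathbb R$, $f:D\to\mathbb F$, and $t_1,t_2\in D$ with $g(t_1)=g(t_2)$. Then $f$ is $g$-continuous at $t_1$ if and only if $f$ is $g$-continuous at $t_2$, and in that case $f(t_1)=f(t_2)$.
   Context: $g:\mathbb R\to\mathbb R$ is nondecreasing and left-continuous, $\mathbb F\in\{\mathbb R,\mathbb C\}$. A function $f:D\subset\mathbb R\to\mathbb F$ is $g$-continuous at $t\in D$ if for every $\varepsilon>0$ there is $\delta>0$ such that $|f(t)-f(s)|<\varepsilon$ for every $s\in D$ with $|g(t)-g(s)|<\delta$. *)

(* Defs.v *)
From Stdlib Require Import Reals.
From Coquelicot Require Import Coquelicot.
Open Scope R_scope.

Definition nondecreasing (g : R -> R) : Prop := forall x y, x <= y -> g x <= g y.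
Definition left_continuous (g : R -> R) : Prop :=
  forall t eps, 0 < eps -> exists delta, 0 < delta /\
    forall s, t - delta < s <= t -> Rabs (g s - g t) < eps.

Definition g_continuous_R (g : R -> R) (D : R -> Prop) (f : R -> R) (t : R) : Prop :=
  forall eps, 0 < eps -> exists delta, 0 < delta /\
    forall s, D s -> Rabs (g t - g s) < delta -> Rabs (f t - f s) < eps.

Definition g_continuous_C (g : R -> R) (D : R -> Prop) (f : R -> C) (t : R) : Prop :=
  forall eps, 0 < eps -> exists delta, 0 < delta /\
    forall s, D s -> Rabs (g t - g s) < delta -> Cmod (Cminus (f t) (f s)) < eps.

(* Main.v *)
Require Import Defs.
From Stdlib Require Import Reals Lra.
From Coquelicot Require Import Coquelicot.
Open Scope R_scope.

Section Gen.
Variables (X : Type) (d : X -> X -> R)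
  (tri : forall x y z, d x z <= d x y + d y z)
  (sym : forall x y, d x y = d y x).

Definition gc (g : R -> R) (D : R -> Prop) (f : R -> X) (t : R) : Prop :=
  forall eps, 0 < eps -> exists delta, 0 < delta /\
    forall s, D s -> Rabs (g t - g s) < delta -> d (f t) (f s) < eps.

Lemma gen_small g D f t1 t2 : D t2 -> g t1 = g t2 -> gc g D f t1 ->
  forall eps, 0 < eps -> d (f t1) (f t2) < eps.
Proof.
  intros H2 Hg Hc eps He. destruct (Hc eps He) as [del [Hd Hs]].
  apply Hs; auto. rewrite Hg, Rminus_diag, Rabs_R0; lra.
Qed.

Lemma gen_trans g D f t1 t2 : D t2 -> g t1 = g t2 -> gc g D f t1 -> gc g D f t2.
Proof.
  intros H2 Hg Hc eps He.
  destruct (Hc (eps/2)) as [del [Hd Hs]]; [lra|].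
  exists del; split; auto. intros s Hs' Hgs.
  pose proof (gen_small g D f t1 t2 H2 Hg Hc (eps/2) ltac:(lra)) as H12.
  rewrite <- Hg in Hgs. specialize (Hs s Hs' Hgs).
  pose proof (tri (f t2) (f t1) (f s)). rewrite (sym (f t2) (f t1)) in H. lra.
Qed.
End Gen.

Lemma C_tri (x y z : C) : Cmod (Cminus x z) <= Cmod (Cminus x y) + Cmod (Cminus y z).
Proof.
  replace (Cminus x z) with (Cplus (Cminus x y) (Cminus y z)).
  - apply Cmod_triangle.
  - destruct x, y, z; unfold Cminus, Cplus, Copp; simpl; f_equal; ring.
Qed.

Lemma C_sym (x y : C) : Cmod (Cminus x y) = Cmod (Cminus y x).
Proof.
  replace (Cminus y x) with (Copp (Cminus x y)).
  - now rewrite Cmod_opp.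
  - destruct x, y; unfold Cminus, Cplus, Copp; simpl; f_equal; ring.
Qed.

Lemma R_tri (x y z : R) : Rabs (x - z) <= Rabs (x - y) + Rabs (y - z).
Proof. replace (x - z) with ((x - y) + (y - z)) by ring. apply Rabs_triang. Qed.

Lemma R_sym (x y : R) : Rabs (x - y) = Rabs (y - x).
Proof. apply Rabs_minus_sym. Qed.

Theorem lemma2p15 (g : R -> R) (Hmono : nondecreasing g) (Hlc : left_continuous g)
  (D : R -> Prop) (t1 t2 : R) (Ht1 : D t1) (Ht2 : D t2) (Hg : g t1 = g t2) :
  (forall f : R -> R,
     (g_continuous_R g D f t1 <-> g_continuous_R g D f t2) /\
     (g_continuous_R g D f t1 -> f t1 = f t2)) /\
  (forall f : R -> C,
     (g_continuous_C g D f t1 <-> g_continuous_C g D f t2) /\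
     (g_continuous_C g D f t1 -> f t1 = f t2)).
Proof.
  split; intro f; split.
  - split.
    + exact (gen_trans R (fun x y => Rabs (x - y)) R_tri R_sym g D f t1 t2 Ht2 Hg).
    + exact (gen_trans R (fun x y => Rabs (x - y)) R_tri R_sym g D f t2 t1 Ht1 (eq_sym Hg)).
  - intro Hc. pose proof (gen_small R (fun x y => Rabs (x - y)) g D f t1 t2 Ht2 Hg Hc) as H.
    destruct (Req_dec (f t1) (f t2)) as [E|E]; auto.
    exfalso. assert (0 < Rabs (f t1 - f t2)) by (apply Rabs_pos_lt; lra).
    specialize (H _ H0). simpl in H. lra.
  - split.
    + exact (gen_trans C (fun x y => Cmod (Cminus x y)) C_tri C_sym g D f t1 t2 Ht2 Hg).
    + exact (gen_trans C (fun x y => Cmod (Cminus x y)) C_tri C_sym g D f t2 t1 Ht1 (eq_sym Hg)).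
  - intro Hc. pose proof (gen_small C (fun x y => Cmod (Cminus x y)) g D f t1 t2 Ht2 Hg Hc) as H.
    assert (Z : Cmod (Cminus (f t1) (f t2)) = 0).
    { pose proof (Cmod_ge_0 (Cminus (f t1) (f t2))).
      destruct (Rle_lt_or_eq_dec _ _ H0) as [L|L]; auto.
      specialize (H _ L). simpl in H. lra. }
    apply Cmod_eq_0 in Z. destruct (f t1), (f t2).
    unfold Cminus, Cplus, Copp in Z; simpl in Z. injection Z; intros; f_equal; lra.
Qed.
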